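(* Let $K\subseteq\mathbb{R}^d$ be a compact, smooth $d$-manifold with boundary. For every $\lambda>0$ there exists $\rho_2=\rho_2(K,\lambda)>0$ such that if $x\in K$, $B(y,r)\subseteq K$ and $\|x-y\|\leq\lambda r$ for some $0<r<\rho_2$, then $\operatorname{conv}(\{x,y\})\subseteq K$.
   Context: $K\subseteq\mathbb{R}^d$ being a smooth $d$-manifold with boundary means: for every $x\in K$ there are open sets $O,U\subseteq\mathbb{R}^d$ with $x\in O$ and a diffeomorphism $\varphi:O\to U$ with $\varphi[O\cap K]=U\cap\mathbb{H}^d$, where $\mathbb{H}^d=[0,\infty)\times\mathbb{R}^{d-1}$. $B(y,r)$ is the open Euclidean ball; $\operatorname{conv}$ denotes convex hull. *)

(* Defs.v *)
From HB Require Import structures.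
From mathcomp Require Import all_boot all_order all_algebra.
From mathcomp Require Import all_classical all_reals all_analysis.
Set Implicit Arguments. Unset Strict Implicit. Unset Printing Implicit Defensive.
Import Order.TTheory GRing.Theory Num.Theory.
Import numFieldNormedType.Exports.
Local Open Scope classical_set_scope.
Local Open Scope ring_scope.

(* R^d is modelled as the row vectors 'rV[R]_d (topology = product topology,
   the usual one on R^d). *)

Definition enorm {R : realType} {d : nat} (v : 'rV[R]_d) : R :=
  Num.sqrt (\sum_(i < d) v ord0 i ^+ 2).

Definition eball {R : realType} {d : nat} (y : 'rV[R]_d) (r : R) : set 'rV[R]_d :=
  [set z | enorm (z - y) < r].

Definition convex_setR {R : realType} {d : nat} (C : set 'rV[R]_d) : Prop :=
  forall a b (t : R), C a -> C b -> 0 <= t <= 1 -> C ((1 - t) *: a + t *: b).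

Definition convex_hull {R : realType} {d : nat} (A : set 'rV[R]_d) : set 'rV[R]_d :=
  \bigcap_(C in [set C : set 'rV[R]_d | convex_setR C /\ A `<=` C]) C.

Fixpoint iterD {R : realType} {d : nat} (vs : seq 'rV[R]_d)
    (f : 'rV[R]_d -> 'rV[R]_d) : 'rV[R]_d -> 'rV[R]_d :=
  match vs with
  | [::] => f
  | v :: vs' => (fun x => derive (iterD vs' f) x v)
  end.

Definition smooth_on {R : realType} {d : nat} (O : set 'rV[R]_d)
    (f : 'rV[R]_d -> 'rV[R]_d) : Prop :=
  forall (vs : seq 'rV[R]_d) (x : 'rV[R]_d), O x ->
    {for x, continuous (iterD vs f)} /\
    (forall v : 'rV[R]_d, derivable (iterD vs f) x v).

Definition diffeo_on {R : realType} {d : nat} (O U : set 'rV[R]_d)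
    (phi : 'rV[R]_d -> 'rV[R]_d) : Prop :=
  exists psi : 'rV[R]_d -> 'rV[R]_d,
    [/\ phi @` O = U, (forall x, O x -> psi (phi x) = x),
        (forall u, U u -> phi (psi u) = u),
        smooth_on O phi & smooth_on U psi].

Definition halfspace {R : realType} {d : nat} : set 'rV[R]_d :=
  [set v | forall i : 'I_d, nat_of_ord i = 0%N -> 0 <= v ord0 i].

Definition smooth_manifold_with_boundary {R : realType} {d : nat}
    (K : set 'rV[R]_d) : Prop :=
  forall x, K x -> exists (O U : set 'rV[R]_d) (phi : 'rV[R]_d -> 'rV[R]_d),
    [/\ open O, open U, O x, diffeo_on O U phi & phi @` (O `&` K) = U `&` halfspace].

(* Main.v *)
Require Import Defs.
From HB Require Import structures.
From mathcomp Require Import all_boot all_order all_algebra.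
From mathcomp Require Import all_classical all_reals all_analysis.
From mathcomp Require Import ring lra.
Import Order.TTheory GRing.Theory Num.Theory.
Import numFieldNormedType.Exports.
Local Open Scope classical_set_scope.
Local Open Scope ring_scope.
Set Implicit Arguments. Unset Strict Implicit. Unset Printing Implicit Defensive.
Lemma line_derivable (R : realType) (d m k : nat) (F : 'rV[R]_d -> 'M[R]_(m,k))
  (u v : 'rV[R]_d) (t : R) :
  derivable F (u + t *: v) v ->
  derivable (fun s : R => F (u + s *: v)) t 1 /\
  'D_1 (fun s : R => F (u + s *: v)) t = 'D_v F (u + t *: v).
Proof.
have E : (fun h : R => h^-1 *: (((fun s : R => F (u + s *: v)) \o shift t) (h *: 1) - F (u + t *: v)))
  = (fun h : R => h^-1 *: ((F \o shift (u + t *: v)) (h *: v) - F (u + t *: v))).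
  apply/funext => h /=; congr (_ *: (F _ - _)).
  by rewrite /shift /= [h *: 1]mulr1 scalerDl addrCA.
by rewrite /derivable /derive E => ?; split.
Qed.

Lemma line_is_derive (R : realType) (d m k : nat) (F : 'rV[R]_d -> 'M[R]_(m,k))
  (u v : 'rV[R]_d) (t : R) i j :
  derivable F (u + t *: v) v ->
  is_derive t 1 (fun s : R => F (u + s *: v) i j) ('D_v F (u + t *: v) i j).
Proof.
move=> /line_derivable [D1 D2].
have := D1 => /derivable_mxP /(_ i j) Dij.
split => //.
by rewrite -D2 derive_mx // mxE.
Qed.

Lemma entry_le (R : realType) (m k : nat) (M : 'M[R]_(m,k)) i j : `|M i j| <= `|M|.
Proof.
rewrite [leRHS]/Num.Def.normr/= mx_normrE.
exact: (le_bigmax _ _ (i, j)).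
Qed.

Lemma norm_le_entries (R : realType) (m k : nat) (M : 'M[R]_(m,k)) (C : R) :
  0 <= C -> (forall i j, `|M i j| <= C) -> `|M| <= C.
Proof.
move=> C0 H.
rewrite [leLHS]/Num.Def.normr/= mx_normrE (bigmax_le _ C0) // => -[i j] _.
Qed.

Lemma is_derive_mulc (R : realType) (c t : R) : is_derive t 1 (fun s : R => s * c) c.
Proof.
have H : is_derive t 1 (c *: (@id R)) (c *: 1) by exact: is_deriveZ.
have -> : (fun s : R => s * c) = c *: (@id R).
  by apply/funext => s /=; rewrite /GRing.scale /= mulrC.
have E : c%:A = c :> R by rewrite [c%:A]mulr1.
by rewrite E in H.
Qed.

Lemma seg_bound (R : realType) (d m k : nat) (F : 'rV[R]_d -> 'M[R]_(m,k))
  (u v : 'rV[R]_d) (s C : R) (D : 'M[R]_(m,k)) :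
  (forall t, (0 <= t <= s) \/ (s <= t <= 0) ->
     derivable F (u + t *: v) v /\ `|'D_v F (u + t *: v) - D| <= C) ->
  `|F (u + s *: v) - F u - s *: D| <= C * `|s|.
Proof.
move=> H.
have C0 : 0 <= C.
  have [s0|s0] := leP 0 s.
    by have [_ h] := H 0 (or_introl (andb_true_intro (conj (lexx 0) s0)));
      exact: le_trans h.
  by have [_ h] := H 0 (or_intror (andb_true_intro (conj (ltW s0) (lexx 0))));
      exact: le_trans h.
apply: norm_le_entries; first exact: mulr_ge0.
move=> i j.
pose phi := (fun t : R => F (u + t *: v) i j) - (fun t : R => t * D i j).
pose dphi := fun t : R => 'D_v F (u + t *: v) i j - D i j.
have dP : forall t, (0 <= t <= s) \/ (s <= t <= 0) -> is_derive t 1 phi (dphi t).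
  move=> t ht; have [Dt _] := H t ht.
  apply: is_deriveB; [exact: line_is_derive | exact: is_derive_mulc].
have bP : forall t, (0 <= t <= s) \/ (s <= t <= 0) -> `|dphi t| <= C.
  move=> t ht; have [_ h] := H t ht; apply: le_trans h.
  by have := entry_le ('D_v F (u + t *: v) - D) i j; rewrite !mxE.
have E : (F (u + s *: v) - F u - s *: D) i j = phi s - phi 0.
  have -> : phi s = F (u + s *: v) i j - s * D i j by [].
  have -> : phi 0 = F (u + 0 *: v) i j - 0 * D i j by [].
  rewrite !mxE scale0r addr0 mul0r subr0; lra.
rewrite E.
have [s0|s0] := leP 0 s.
  have [c c01 ->] : exists2 c, c \in `[0, s]%R & phi s - phi 0 = dphi c * (s - 0).
    apply: MVT_segment => //.
      move=> x; rewrite in_itv /= => /andP [x0 xs]; apply: dP; left.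
      by rewrite !ltW.
    apply: derivable_within_continuous => x; rewrite in_itv /= => /andP[x0 xs].
    by have [] := dP x (or_introl (andb_true_intro (conj x0 xs))).
  rewrite subr0 normrM ler_wpM2r //; apply: bP; left.
  by move: c01; rewrite in_itv.
have [c c01 E2] : exists2 c, c \in `[s, 0]%R & phi 0 - phi s = dphi c * (0 - s).
  apply: MVT_segment; first exact: ltW.
    move=> x; rewrite in_itv /= => /andP [x0 xs]; apply: dP; right.
    by rewrite !ltW.
  apply: derivable_within_continuous => x; rewrite in_itv /= => /andP[x0 xs].
  by have [] := dP x (or_intror (andb_true_intro (conj x0 xs))).
rewrite -normrN opprB E2 sub0r normrM normrN ler_wpM2r //; apply: bP; right.
by move: c01; rewrite in_itv.
Qed.

Definition ev (R : realType) (d : nat) (j : 'I_d) : 'rV[R]_d := delta_mx 0 j.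
Definition pk (R : realType) (d : nat) (a b : 'rV[R]_d) (k : nat) : 'rV[R]_d :=
  \row_j (if (j < k)%N then b 0 j else a 0 j).

Lemma pkS (R : realType) (d : nat) (a b : 'rV[R]_d) (j : 'I_d) :
  pk a b j.+1 = pk a b j + (b 0 j - a 0 j) *: ev R j.
Proof.
apply/matrixP => i l; rewrite !mxE (ord1 i) eqxx /=.
case: (ltngtP l j) => [lj|jl|lj].
- have -> : (l < j.+1)%N by apply: ltnW.
  have -> : (l == j) = false by apply/negbTE; rewrite neq_ltn lj.
  by rewrite mulr0 addr0.
- have -> : (l < j.+1)%N = false by apply/negbTE; rewrite -leqNgt.
  have -> : (l == j) = false by apply/negbTE; rewrite neq_ltn jl orbT.
  by rewrite mulr0 addr0.
- have -> : l = j by apply: val_inj.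
  by rewrite ?ltnSn ?ltnn eqxx mulr1 addrC subrK.
Qed.

Lemma pk0 (R : realType) (d : nat) (a b : 'rV[R]_d) : pk a b 0 = a.
Proof. by apply/matrixP => i l; rewrite !mxE (ord1 i). Qed.

Lemma pkd (R : realType) (d : nat) (a b : 'rV[R]_d) : pk a b d = b.
Proof. by apply/matrixP => i l; rewrite !mxE (ord1 i) ltn_ord. Qed.

Lemma sum_split_ord (R : realType) (d : nat) (G : 'I_d -> R) (j : 'I_d) :
  \sum_(l < d | (l < j.+1)%N) G l = \sum_(l < d | (l < j)%N) G l + G j.
Proof.
rewrite (bigD1 j) //= addrC; congr (_ + _).
apply: eq_bigl => l; rewrite ltnS leq_eqVlt.
case: (eqVneq l j) => [->|lj] /=; first by rewrite andbF ltnn.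
by rewrite andbT (inj_eq val_inj) (negbTE lj).
Qed.

Lemma sum_split_ordM (R : realType) (d m k : nat) (G : 'I_d -> 'M[R]_(m,k)) (j : 'I_d) :
  \sum_(l < d | (l < j.+1)%N) G l = \sum_(l < d | (l < j)%N) G l + G j.
Proof.
rewrite (bigD1 j) //= addrC; congr (_ + _).
apply: eq_bigl => l; rewrite ltnS leq_eqVlt.
case: (eqVneq l j) => [->|lj] /=; first by rewrite andbF ltnn.
by rewrite andbT (inj_eq val_inj) (negbTE lj).
Qed.

Lemma rearr (V : zmodType) (A X Fa S1 T : V) :
  A - Fa - (S1 + T) = (A - X - T) + (X - Fa - S1).
Proof.
rewrite !addrA (addrAC (A - X) (-T) X) subrK opprD addrA.
by rewrite (addrAC A (-T)) (addrAC (A - Fa) (-T)).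
Qed.

Lemma tele (R : realType) (d m k : nat) (F : 'rV[R]_d -> 'M[R]_(m,k))
  (a b : 'rV[R]_d) (C : R) (D : 'I_d -> 'M[R]_(m,k)) :
  (forall (j : 'I_d) t, (0 <= t <= b 0 j - a 0 j) \/ (b 0 j - a 0 j <= t <= 0) ->
     derivable F (pk a b j + t *: ev R j) (ev R j) /\
     `|'D_(ev R j) F (pk a b j + t *: ev R j) - D j| <= C) ->
  `|F b - F a - \sum_(j < d) (b 0 j - a 0 j) *: D j| <= C * \sum_(j < d) `|b 0 j - a 0 j|.
Proof.
move=> H.
suff S : forall k, (k <= d)%N ->
  `|F (pk a b k) - F a - \sum_(j < d | (j < k)%N) (b 0 j - a 0 j) *: D j|
     <= C * \sum_(j < d | (j < k)%N) `|b 0 j - a 0 j|.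
  have E1 : forall (G : 'I_d -> R), \sum_(j < d | (j < d)%N) G j = \sum_(j < d) G j.
    by move=> *; apply: eq_bigl => j; rewrite ltn_ord.
  have E2 : \sum_(j < d | (j < d)%N) (b 0 j - a 0 j) *: D j = \sum_(j < d) (b 0 j - a 0 j) *: D j.
    by apply: eq_bigl => j; rewrite ltn_ord.
  by have := S d (leqnn d); rewrite pkd E2 E1.
elim => [_|q IH kd].
  rewrite pk0 subrr !big_pred0 // ?mulr0 ?subr0 ?normr0 //.
have kd' : (q < d)%N by [].
pose jk := Ordinal kd'.
have -> : q.+1 = (jk.+1)%N by [].
rewrite pkS sum_split_ord sum_split_ordM.
have IH' := IH (ltnW kd).
have SB := seg_bound (u := pk a b jk) (v := ev R jk) (s := b 0 jk - a 0 jk) (H jk).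
set X := F (pk a b jk).
set S1 := \sum_(j < d | (j < jk)%N) (b 0 j - a 0 j) *: D j.
rewrite (rearr _ X).
rewrite mulrDr addrC; apply: le_trans (ler_normD _ _) _.
by apply: lerD.
Qed.

Lemma norm_lt_entries (R : realType) (m k : nat) (M : 'M[R]_(m,k)) (C : R) :
  0 < C -> (forall i j, `|M i j| < C) -> `|M| < C.
Proof.
move=> C0 H.
rewrite [ltLHS]/Num.Def.normr/= mx_normrE; apply/bigmax_ltP; split => // -[i j] _.
Qed.

Lemma pk_in_ball (R : realType) (d : nat) (c a b : 'rV[R]_d) (rho : R) (j : 'I_d) (t : R) :
  `|c - a| < rho -> `|c - b| < rho ->
  (0 <= t <= b 0 j - a 0 j) \/ (b 0 j - a 0 j <= t <= 0) ->
  `|c - (pk a b j + t *: ev R j)| < rho.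
Proof.
move=> ca cb ht.
have r0 : 0 < rho by apply: le_lt_trans ca.
apply: norm_lt_entries => // i l.
have ea := le_lt_trans (entry_le (c - a) i l) ca.
have eb := le_lt_trans (entry_le (c - b) i l) cb.
rewrite !mxE (ord1 i) /= in ea eb *.
case: (eqVneq l j) => [lj|ne].
  subst l; rewrite ltnn mulr1.
  move: ea eb; rewrite !ltr_norml => /andP[a1 a2] /andP[b1 b2].
  case: ht => /andP[h1 h2]; apply/andP; split; lra.
by rewrite mulr0 addr0; case: ifP.
Qed.

Lemma sum_le_dnorm (R : realType) (d : nat) (v : 'rV[R]_d) :
  \sum_(j < d) `|v 0 j| <= d%:R * `|v|.
Proof.
have -> : d%:R * `|v| = \sum_(j < d) `|v| by rewrite sumr_const card_ord mulr_natl.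
by apply: ler_sum => j _; exact: entry_le.
Qed.

Lemma box_lip (R : realType) (d m k : nat) (F : 'rV[R]_d -> 'M[R]_(m,k))
  (c : 'rV[R]_d) (rho C : R) : 0 <= C ->
  (forall z, `|c - z| < rho -> forall j, derivable F z (ev R j) /\ `|'D_(ev R j) F z| <= C) ->
  forall a b, `|c - a| < rho -> `|c - b| < rho -> `|F b - F a| <= C * d%:R * `|b - a|.
Proof.
move=> C0 H a b ca cb.
have := @tele R d m k F a b C (fun _ => 0).
rewrite big1 ?subr0; last by move=> j _; rewrite scaler0.
move=> T; apply: le_trans (T _) _.
  move=> j t ht; have [Dz Bz] := H _ (pk_in_ball ca cb ht) j.
  by rewrite subr0.
rewrite -mulrA ler_wpM2l //.
have := sum_le_dnorm (b - a).
by under eq_bigr do rewrite !mxE.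
Qed.

Lemma near_ball (R : realType) (d : nat) (z : 'rV[R]_d) (P : 'rV[R]_d -> Prop) :
  (\forall u \near z, P u) -> exists2 rho : R, 0 < rho & forall u, `|z - u| < rho -> P u.
Proof.
move=> /nbhs_ballP [rho rho0 H]; exists rho => // u zu; apply: H.
by rewrite -ball_normE /=.
Qed.

Lemma open_near (R : realType) (d : nat) (O : set 'rV[R]_d) (z : 'rV[R]_d) :
  open O -> O z -> \forall u \near z, O u.
Proof. by move=> Oop Oz; exact: Oop. Qed.

Lemma dir_lin (R : realType) (d m k : nat) (F : 'rV[R]_d -> 'M[R]_(m,k)) (z w : 'rV[R]_d) :
  (forall j, \forall u \near z, derivable F u (ev R j)) ->
  (forall j, {for z, continuous (fun u => 'D_(ev R j) F u)}) ->
  derivable F z w /\ 'D_w F z = \sum_(j < d) w 0 j *: 'D_(ev R j) F z.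
Proof.
move=> Hd Hc.
set L := \sum_(j < d) w 0 j *: 'D_(ev R j) F z.
suff C : (fun h : R => h^-1 *: ((F \o shift z) (h *: w) - F z)) @ 0^' --> L.
  have D : derivable F z w by apply/cvg_ex; exists L.
  by split => //; apply: cvg_lim.
apply/cvgrPdist_le => e e0.
set W := d%:R * `|w| + 1.
have W0 : 0 < W by rewrite /W ltr_pwDr // mulr_ge0.
set ep := e / W.
have ep0 : 0 < ep by rewrite divr_gt0.
have HN : \forall u \near z, forall j, derivable F u (ev R j) /\
     `|'D_(ev R j) F u - 'D_(ev R j) F z| <= ep.
  have HH : forall j, \forall u \near z, derivable F u (ev R j) /\
     `|'D_(ev R j) F u - 'D_(ev R j) F z| <= ep.
    move=> j; have := Hc j; move=> /cvgrPdist_le /(_ ep ep0) B.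
    near=> u; split; first by near: u; exact: (Hd j).
    by rewrite distrC; near: u; exact: B.
  exact: (filter_forall _ HH).
have [rho rho0 Hb] := near_ball HN.
near=> h.
have h0 : h != 0 by near: h; exact: nbhs_dnbhs_neq.
have hs : `|h| < rho / (`|w| + 1).
  near: h; apply: dnbhs0_lt; rewrite divr_gt0 //; exact: ltr_pwDr.
set b := h *: w + z.
have zb : `|z - b| < rho.
  rewrite /b opprD addrCA subrr addr0 normrN normrZ.
  apply: le_lt_trans (_ : `|h| * (`|w| + 1) < rho).
    by rewrite ler_wpM2l // lerDl.
  by rewrite -ltr_pdivlMr // ltr_pwDr.
have zz : `|z - z| < rho by rewrite subrr normr0.
have T := @tele R d m k F z b ep (fun j => 'D_(ev R j) F z).
have T' : `|F b - F z - h *: L| <= ep * (d%:R * (`|h| * `|w|)).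
  have Eb : forall j, b 0 j - z 0 j = h * w 0 j.
    by move=> j; rewrite /b !mxE addrK.
  have EL : \sum_(j < d) (b 0 j - z 0 j) *: 'D_(ev R j) F z = h *: L.
    rewrite /L scaler_sumr; apply: eq_bigr => j _.
    by rewrite Eb scalerA.
  rewrite -EL; apply: le_trans (T _) _.
    move=> j t ht; have [Dz Bz] := Hb _ (pk_in_ball zz zb ht) j.
    by split.
  rewrite ler_wpM2l //; first exact: ltW.
  have := sum_le_dnorm (h *: w); rewrite normrZ.
  by under eq_bigr do rewrite !mxE -Eb.
rewrite /= -/b.
have -> : L - h^-1 *: (F b - F z) = h^-1 *: (h *: L - (F b - F z)).
  by rewrite [RHS]scalerBr scalerA mulVf // scale1r.
rewrite normrZ normfV -normrN opprB.
rewrite ler_pdivrMl ?normr_gt0 //.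
apply: le_trans T' _.
rewrite (mulrCA d%:R) (mulrCA ep) ler_wpM2l //.
rewrite /ep mulrAC ler_pdivrMr // ler_wpM2l //; first exact: ltW.
by rewrite /W lerDl.
Unshelve. all: by end_near.
Qed.


Lemma iterD_cons (R : realType) (d : nat) (v : 'rV[R]_d) vs f :
  Defs.iterD (v :: vs) f = (fun x => 'D_v (Defs.iterD vs f) x).
Proof. by []. Qed.

Lemma smooth_lip (R : realType) (d : nat) (W : set 'rV[R]_d) (I : finType)
  (G : I -> 'rV[R]_d -> 'rV[R]_d) (z : 'rV[R]_d) :
  open W -> W z -> (forall i, smooth_on W (G i)) ->
  exists2 s : R, 0 < s & exists2 L : R, 0 < L &
    (forall u, `|z - u| < s -> W u) /\
    (forall i a b, `|z - a| < s -> `|z - b| < s -> `|G i b - G i a| <= L * `|b - a|).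
Proof.
move=> Wop Wz Gs.
set C := 1 + \sum_(p : I * 'I_d) `|'D_(ev R p.2) (G p.1) z|.
have C0 : 0 <= C.
  by rewrite /C addr_ge0 // sumr_ge0.
have Cp : forall p : I * 'I_d, `|'D_(ev R p.2) (G p.1) z| + 1 <= C.
  move=> p; rewrite /C addrC lerD2l (bigD1 p) //= lerDl sumr_ge0 //.
have HH : forall p : I * 'I_d, \forall u \near z,
    derivable (G p.1) u (ev R p.2) /\ `|'D_(ev R p.2) (G p.1) u| <= C.
  move=> p.
  have [Hc _] := Gs p.1 [:: ev R p.2] z Wz.
  move: Hc => /cvgrPdist_le /(_ 1 ltr01) B.
  near=> u; split.
    have Wu : W u by near: u; exact: open_near.
    by have [_ Hd] := Gs p.1 [::] u Wu; exact: (Hd (ev R p.2)).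
  apply: le_trans (Cp p).
  have : `|'D_(ev R p.2) (G p.1) z - 'D_(ev R p.2) (G p.1) u| <= 1.
    by near: u; exact: B.
  set Du := 'D_(ev R p.2) (G p.1) u; set Dz := 'D_(ev R p.2) (G p.1) z.
  move=> h; have E : Du = Dz - (Dz - Du) by rewrite opprB addrC subrK.
  rewrite E; apply: le_trans (ler_normB _ _) _.
  by rewrite lerD2l.
have HN : \forall u \near z, W u /\ forall p : I * 'I_d,
    derivable (G p.1) u (ev R p.2) /\ `|'D_(ev R p.2) (G p.1) u| <= C.
  near=> u; split; first by near: u; exact: open_near.
  near: u; exact: (filter_forall _ HH).
have [s s0 Hs] := near_ball HN.
exists s => //; exists (C * d%:R + 1).
  by rewrite ltr_pwDr // mulr_ge0.
split; first by move=> u /Hs [].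
move=> i a b za zb.
have := @box_lip R d 1 d (G i) z s C C0 _ a b za zb.
move=> /(_ _) H; apply: le_trans (H _) _.
  by move=> u zu j; have [_ /(_ (i, j))] := Hs u zu.
by rewrite ler_wpM2r // lerDl.
Unshelve. all: by end_near.
Qed.

Lemma iterD_app (R : realType) (d : nat) (vs : seq 'rV[R]_d) v f :
  Defs.iterD vs (Defs.iterD [:: v] f) = Defs.iterD (vs ++ [:: v]) f.
Proof. by elim: vs => [|w vs IH] //=; rewrite IH. Qed.

Lemma smooth_D (R : realType) (d : nat) (W : set 'rV[R]_d) f v :
  smooth_on W f -> smooth_on W (fun x => 'D_v f x).
Proof.
move=> Hs vs x Wx.
have -> : (fun x => 'D_v f x) = Defs.iterD [:: v] f by [].
rewrite iterD_app; exact: Hs.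
Qed.

Lemma sqr_le_norm (R : realType) (x y : R) : `|x| <= y -> x ^+ 2 <= y ^+ 2.
Proof.
move=> h; have y0 : 0 <= y by apply: le_trans h.
rewrite -real_normK ?num_real // !expr2; apply: ler_pM => //.
Qed.

Lemma enorm_ge (R : realType) (d : nat) (v : 'rV[R]_d) : `|v| <= enorm v.
Proof.
apply: norm_le_entries; first exact: sqrtr_ge0.
move=> i j; rewrite (ord1 i) /enorm.
rewrite -sqrtr_sqr ler_wsqrtr //.
by rewrite (bigD1 j) //= lerDl sumr_ge0 // => l _; rewrite sqr_ge0.
Qed.

Lemma enorm_le (R : realType) (d : nat) (v : 'rV[R]_d) : enorm v <= d%:R * `|v|.
Proof.
rewrite /enorm -(@ger0_norm _ (d%:R * `|v|)) ?mulr_ge0 // -sqrtr_sqr ler_wsqrtr //.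
apply: le_trans (_ : \sum_(i < d) `|v| ^+ 2 <= _).
  by apply: ler_sum => i _; apply: sqr_le_norm; exact: entry_le.
rewrite sumr_const card_ord exprMn -[_ *+ d]mulr_natl ler_wpM2r ?sqr_ge0 //.
case: d v => [|n] v; first by rewrite expr0n.
by rewrite expr2 ler_peMr // ler1n.
Qed.

Lemma enorm0 (R : realType) (d : nat) : enorm (0 : 'rV[R]_d) = 0.
Proof.
rewrite /enorm big1 ?sqrtr0 // => i _; rewrite mxE expr2 mulr0 //.
Qed.

Lemma convex_lower (R : realType) (h dh : R -> R) (Kc t : R) :
  (forall s : R, 0 <= s <= 1 -> is_derive s 1 h (dh s)) ->
  (forall s1 s2 : R, 0 <= s1 <= 1 -> 0 <= s2 <= 1 -> dh s2 - dh s1 <= Kc) ->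
  0 <= t <= 1 -> (1 - t) * h 0 + t * h 1 - t * (1 - t) * Kc <= h t.
Proof.
move=> Hd Hb /andP[t0 t1].
have cont : forall a b, 0 <= a -> b <= 1 -> {within `[a, b], continuous h}.
  move=> a b a0 b1; apply: derivable_within_continuous => x.
  rewrite in_itv /= => /andP[ax xb].
  by have [] := Hd x (andb_true_intro (conj (le_trans a0 ax) (le_trans xb b1))).
have [c1 c1i e1] : exists2 c, c \in `[0, t]%R & h t - h 0 = dh c * (t - 0).
  apply: MVT_segment => //; last exact: cont.
  move=> x; rewrite in_itv /= => /andP[x0 xt]; apply: Hd.
  by rewrite !ltW // (lt_le_trans xt).
have [c2 c2i e2] : exists2 c, c \in `[t, 1]%R & h 1 - h t = dh c * (1 - t).
  apply: MVT_segment => //; last exact: cont.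
  move=> x; rewrite in_itv /= => /andP[x0 xt]; apply: Hd.
  by rewrite !ltW // (le_lt_trans t0).
move: c1i c2i; rewrite !in_itv /= => /andP[c10 c1t] /andP[c2t c21].
have B := Hb c1 c2 (andb_true_intro (conj c10 (le_trans c1t t1)))
   (andb_true_intro (conj (le_trans t0 c2t) c21)).
have P : 0 <= t * (1 - t) * (Kc - (dh c2 - dh c1)).
  by rewrite !mulr_ge0 // ?subr_ge0.
rewrite subr0 in e1.
have -> : h t = h 0 + dh c1 * t by rewrite -e1 addrC subrK.
have -> : h 1 = h 0 + dh c1 * t + dh c2 * (1 - t).
  by rewrite -e1 -e2; ring.
move: P; set a := dh c1; set b := dh c2; move=> P.
have E : t * (1 - t) * (Kc - (b - a)) = h 0 + a * t - ((1 - t) * h 0 + t * (h 0 + a * t + b * (1 - t)) - t * (1 - t) * Kc).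
  by ring.
by rewrite -subr_ge0 -E.
Qed.


Lemma norm_ev (R : realType) (n : nat) (j : 'I_n) : `|ev R j| <= 1.
Proof.
apply: norm_le_entries => // i l; rewrite !mxE.
by case: (_ && _); rewrite ?normr1 ?normr0.
Qed.

Lemma enormN (R : realType) (d : nat) (v : 'rV[R]_d) : enorm (- v) = enorm v.
Proof. by rewrite /enorm; congr Num.sqrt; apply: eq_bigr => j _; rewrite mxE sqrrN. Qed.

Lemma local3 (R : realType) (n : nat) (K : set 'rV[R]_n.+1) (lambda : R) (p : 'rV[R]_n.+1) :
  0 < lambda -> smooth_manifold_with_boundary K -> K p ->
  exists2 delta : R, 0 < delta & exists2 rho : R, 0 < rho &
   forall x y r t, `|p - x| < delta -> K x -> eball y r `<=` K ->
     enorm (x - y) <= lambda * r -> 0 < r -> r < rho -> 0 <= t <= 1 ->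
     K (x + t *: (y - x)).
Proof.
move=> lam0 Hman Kp.
case: (Hman p Kp) => O1 [U1 [phi [Oop Uop Op [psi [imO psiphi phipsi sphi spsi]] imK]]].
set q := phi p.
have Uq : U1 q by rewrite -imO; exists p.
have [sp sp0 [Lp Lp0 [sU Lip]]] :=
  @smooth_lip R n.+1 U1 unit (fun _ => psi) q Uop Uq (fun _ => spsi).
have [s2 s20 [L2 L20 [sO Lip2]]] :=
  @smooth_lip R n.+1 O1 'I_n.+1 (fun j x => 'D_(ev R j) phi x) p Oop Op
     (fun j => smooth_D (ev R j) sphi).
have [s3 s30 Hs3] : exists2 s3 : R, 0 < s3 & forall z, `|p - z| < s3 -> `|q - phi z| < sp / 2.
  have [Hc _] := sphi [::] p Op.
  move: Hc => /cvgrPdist_lt /(_ (sp / 2)) Hn.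
  by apply: near_ball; apply: Hn; rewrite divr_gt0.
set i0 : 'I_n.+1 := ord0.
set dd : R := n.+1%:R.
have dd0 : 0 < dd by rewrite /dd ltr0n.
set S := Num.min s2 s3.
have S0 : 0 < S by rewrite lt_min s20 s30.
have Ss2 : S <= s2 by rewrite ge_min lexx.
have Ss3 : S <= s3 by rewrite ge_min lexx orbT.
set delta := S / 2.
have delta0 : 0 < delta by rewrite divr_gt0.
set L := dd * Lp.
have L0 : 0 < L by rewrite mulr_gt0.
set M := L * dd * L2 * lambda ^+ 2.
have M0 : 0 < M by rewrite !mulr_gt0 // exprn_gt0.
set rho := Num.min (delta / lambda) (Num.min (L * sp / 2) M^-1).
have rho0 : 0 < rho by rewrite !lt_min !divr_gt0 ?mulr_gt0 ?invr_gt0.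
exists delta => //; exists rho => //.
move=> x y r t px Kx Kb xy r0 rrho t01.
have rd : lambda * r < delta.
  by move: rrho; rewrite !lt_min => /andP[+ _]; rewrite ltr_pdivlMr // mulrC.
have rsp : r <= L * sp / 2.
  by move: rrho; rewrite !lt_min => /andP[_ /andP[/ltW + _]].
have rM : r <= M^-1.
  by move: rrho; rewrite !lt_min => /andP[_ /andP[_ /ltW]].
have Ky : K y by apply: Kb; rewrite /eball /= subrr enorm0.
set w := y - x.
have wn : `|w| <= lambda * r.
  by apply: le_trans (enorm_ge _) _; rewrite /w -opprB enormN.
have wxy : `|x - y| = `|w| by rewrite /w -opprB normrN.
have py : `|p - y| < S.
  have -> : p - y = (p - x) + (x - y) by rewrite addrA subrK.
  apply: le_lt_trans (ler_normD _ _) _; rewrite wxy.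
  have : `|w| < delta by apply: le_lt_trans wn rd.
  by move: px; rewrite /delta; lra.
have pz : forall s, 0 <= s <= 1 -> `|p - (x + s *: w)| < S.
  move=> s /andP[s0 s1].
  have -> : p - (x + s *: w) = (p - x) - s *: w by rewrite opprD addrA.
  apply: le_lt_trans (ler_normB _ _) _; rewrite normrZ ger0_norm //.
  have : `|w| < delta by apply: le_lt_trans wn rd.
  have : s * `|w| <= `|w| by rewrite ler_piMl.
  by move: px; rewrite /delta; lra.
have Ox : O1 x by apply: sO; apply: lt_le_trans Ss2; move: px; rewrite /delta; lra.
have Oy : O1 y by apply: sO; apply: lt_le_trans Ss2.
have hK : forall z, O1 z -> K z -> 0 <= phi z 0 i0.
  move=> z Oz Kz; have : (U1 `&` halfspace) (phi z) by rewrite -imK; exists z.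
  by case => _ /(_ i0 erefl).
have Kback : forall z, O1 z -> 0 <= phi z 0 i0 -> K z.
  move=> z Oz hz.
  have : (U1 `&` halfspace) (phi z).
    split; first by rewrite -imO; exists z.
    move=> i /= i_0; have -> : i = i0 by apply: val_inj.
    exact: hz.
  rewrite -imK => -[z' [Oz' Kz'] e].
  by have := psiphi z' Oz'; rewrite e psiphi // => ->.
have gy : r / L <= phi y 0 i0.
  rewrite leNgt; apply/negP => gyl.
  have gy0 := hK y Oy Ky.
  have rL0 : 0 < r / L by rewrite divr_gt0.
  set c := (phi y 0 i0 + r / L) / 2.
  have c0 : 0 < c by rewrite /c; lra.
  have cg : phi y 0 i0 < c by rewrite /c; lra.
  have cr : c < r / L by rewrite /c; lra.
  have rLsp : r / L <= sp / 2.
    by rewrite ler_pdivrMr // mulrC mulrA.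
  set u := phi y - c *: ev R i0.
  have qy : `|q - phi y| < sp / 2 by apply: Hs3; apply: lt_le_trans Ss3.
  have evn := norm_ev R i0.
  have cev : `|c *: ev R i0| <= c.
    by rewrite normrZ ger0_norm ?(ltW c0) // -[X in _ <= X]mulr1 ler_wpM2l // ltW.
  have qu : `|q - u| < sp.
    have -> : q - u = (q - phi y) + c *: ev R i0 by rewrite /u opprB addrA addrAC.
    apply: le_lt_trans (ler_normD _ _) _.
    by move: qy cev cr rLsp; lra.
  have Uu := sU u qu.
  have [z' Oz' ez'] : exists2 z', O1 z' & phi z' = u.
    by move: Uu; rewrite -imO => -[z' ? ?]; exists z'.
  have psu : psi u = z' by rewrite -ez' psiphi.
  have u0 : u 0 i0 < 0.
    rewrite /u !mxE eqxx mulr1.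
    by move: cg; lra.
  have nK : ~ K z'.
    by move=> Kz'; have := hK z' Oz' Kz'; rewrite ez' leNgt u0.
  have rz : r <= enorm (z' - y).
    by rewrite leNgt; apply/negP => h; apply: nK; apply: Kb.
  have qy' : `|q - phi y| < sp by move: qy; lra.
  have Lz := Lip tt (phi y) u qy' qu.
  rewrite psu psiphi // in Lz.
  have uy : `|u - phi y| <= c.
    by rewrite /u addrAC subrr add0r normrN.
  have := le_trans rz (enorm_le _).
  have : Lp * `|u - phi y| <= Lp * c by rewrite ler_wpM2l // ltW.
  have : L * c < r by move: cr; rewrite ltr_pdivlMr // mulrC.
  rewrite /L; move=> h1 h2 h3.
  have h4 : dd * `|z' - y| <= dd * (Lp * c).
    by apply: ler_wpM2l; [exact: ltW | exact: le_trans Lz h2].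
  by move: h1 h3 h4; rewrite mulrA; lra.
have DL : forall s, 0 <= s <= 1 -> derivable phi (x + s *: w) w /\
    'D_w phi (x + s *: w) = \sum_(j < n.+1) w 0 j *: 'D_(ev R j) phi (x + s *: w).
  move=> s hs; have Oz : O1 (x + s *: w) by apply: sO; apply: lt_le_trans Ss2; exact: pz.
  apply: dir_lin.
    move=> j; near=> u'.
    have Ou : O1 u' by near: u'; exact: open_near.
    by have [_ Hd] := sphi [::] u' Ou; exact: Hd.
  by move=> j; have [Hc _] := sphi [:: ev R j] _ Oz.
set hh := fun s => phi (x + s *: w) 0 i0.
set dh := fun s => 'D_w phi (x + s *: w) 0 i0.
have Hd : forall s : R, 0 <= s <= 1 -> is_derive s 1 hh (dh s).
  by move=> s hs; exact: line_is_derive (DL s hs).1.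
set Kc := dd * L2 * (lambda * r) ^+ 2.
have Hb : forall a1 a2 : R, 0 <= a1 <= 1 -> 0 <= a2 <= 1 -> dh a2 - dh a1 <= Kc.
  move=> a1 a2 h1 h2.
  apply: le_trans (ler_norm _) _.
  have -> : dh a2 - dh a1 = ('D_w phi (x + a2 *: w) - 'D_w phi (x + a1 *: w)) 0 i0.
    by rewrite !mxE.
  apply: le_trans (entry_le _ _ _) _.
  rewrite (DL a1 h1).2 (DL a2 h2).2 -sumrB.
  apply: le_trans (ler_norm_sum _ _ _) _.
  have zz : `|x + a2 *: w - (x + a1 *: w)| <= `|w|.
    rewrite opprD addrACA subrr add0r -scalerBl normrZ ler_piMl //.
    move: h1 h2 => /andP[? ?] /andP[? ?]; rewrite ler_norml; apply/andP; split; lra.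
  apply: le_trans (_ : \sum_(j < n.+1) `|w| * (L2 * `|w|) <= _).
    apply: ler_sum => j _.
    rewrite -scalerBr normrZ; apply: ler_pM => //.
      exact: entry_le.
    apply: le_trans (Lip2 j _ _ _ _) _.
        by apply: lt_le_trans Ss2; exact: pz.
      by apply: lt_le_trans Ss2; exact: pz.
    by apply: ler_wpM2l; [exact: ltW | exact: zz].
  rewrite sumr_const card_ord -mulr_natl /Kc -/dd -mulrA.
  apply: ler_wpM2l; first exact: ltW.
  rewrite mulrCA; apply: ler_wpM2l; first exact: ltW.
  by rewrite -expr2; apply: sqr_le_norm; rewrite normr_id.
have CL := convex_lower Hd Hb t01.
have hh0 : hh 0 = phi x 0 i0 by rewrite /hh scale0r addr0.
have hh1 : hh 1 = phi y 0 i0 by rewrite /hh scale1r /w addrC subrK.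
rewrite hh0 hh1 in CL.
have gx := hK x Ox Kx.
have Kc0 : 0 <= Kc by rewrite /Kc !mulr_ge0 ?sqr_ge0 // ltW.
have KcL : Kc <= r / L.
  rewrite ler_pdivlMr // /Kc.
  have : r * M <= 1 by rewrite -ler_pdivlMr // mul1r.
  have -> : dd * L2 * (lambda * r) ^+ 2 * L = r * M * r.
    by rewrite /M; ring.
  move=> h; rewrite -[X in _ <= X]mul1r ler_wpM2r //; exact: ltW.
move: t01 => /andP[t0 t1].
have A : 0 <= (1 - t) * phi x 0 i0 by rewrite mulr_ge0 // subr_ge0.
have B : 0 <= t * (phi y 0 i0 - (1 - t) * Kc).
  apply: mulr_ge0 => //; rewrite subr_ge0.
  apply: le_trans gy; apply: le_trans KcL.
  by rewrite ler_piMl //; lra.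
have E : (1 - t) * phi x 0 i0 + t * phi y 0 i0 - t * (1 - t) * Kc =
         (1 - t) * phi x 0 i0 + t * (phi y 0 i0 - (1 - t) * Kc) by ring.
rewrite E in CL.
have Oz : O1 (x + t *: w).
  by apply: sO; apply: lt_le_trans Ss2; apply: pz; rewrite t0 t1.
apply: Kback => //.
by apply: le_trans CL; exact: addr_ge0.
Unshelve. all: by end_near.
Qed.

Lemma seq_min_pos (R : realType) (T : eqType) (s : seq T) (f : T -> R) :
  (forall p, 0 < f p) -> exists2 m : R, 0 < m & forall p, p \in s -> m <= f p.
Proof.
move=> fp; elim: s => [|a s [m m0 Hm]]; first by exists 1.
exists (Num.min m (f a)); first by rewrite lt_min m0 fp.
move=> p; rewrite in_cons => /orP[/eqP ->|ps]; first by rewrite ge_min lexx orbT.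
by rewrite ge_min Hm.
Qed.

Lemma hull_seg (R : realType) (d : nat) (K : set 'rV[R]_d) (x y : 'rV[R]_d) :
  (forall t : R, 0 <= t <= 1 -> K (x + t *: (y - x))) ->
  convex_hull ([set x] `|` [set y]) `<=` K.
Proof.
move=> H z.
set CC := [set z | exists2 t : R, 0 <= t <= 1 & z = x + t *: (y - x)].
have convC : convex_setR CC.
  move=> a b s [t1 h1 ->] [t2 h2 ->] hs; exists ((1 - s) * t1 + s * t2).
    move: h1 h2 hs => /andP[? ?] /andP[? ?] /andP[? ?]; apply/andP; split; nra.
  by apply/matrixP => i j; rewrite !mxE; ring.
have HAC : [set x] `|` [set y] `<=` CC.
  move=> u [->|->].
    by exists 0; rewrite ?lexx ?ler01 // scale0r addr0.
  by exists 1; rewrite ?lexx ?ler01 // scale1r addrC subrK.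
move=> /(_ CC (conj convC HAC)) [t ht ->]; exact: H.
Qed.

Unset Implicit Arguments.

Theorem lemma3p7 (R : realType) (d : nat) (K : set 'rV[R]_d) :
  compact K -> smooth_manifold_with_boundary K ->
  forall lambda : R, 0 < lambda ->
  exists rho2 : R, 0 < rho2 /\
    forall (x y : 'rV[R]_d) (r : R),
      K x -> eball y r `<=` K -> enorm (x - y) <= lambda * r ->
      0 < r -> r < rho2 ->
      convex_hull ([set x] `|` [set y]) `<=` K.
Proof.
move=> Kc Hman lambda lam0.
case: d K Kc Hman => [|n] K Kc Hman.
  exists 1; split => // x y r Kx _ _ _ _.
  apply: hull_seg => t _.
  have -> : x + t *: (y - x) = x by apply/matrixP => i [].
  exact: Kx.
have ex : forall p : 'rV[R]_n.+1, exists dr : R * R, [/\ 0 < dr.1, 0 < dr.2 &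
   (K p -> forall x y r t, `|p - x| < dr.1 -> K x -> eball y r `<=` K ->
     enorm (x - y) <= lambda * r -> 0 < r -> r < dr.2 -> 0 <= t <= 1 ->
     K (x + t *: (y - x)))].
  move=> p; have [Kp|nKp] := pselect (K p).
    have [de de0 [rh rh0 H]] := local3 lam0 Hman Kp.
    by exists (de, rh); split.
  by exists (1, 1); split.
have [f Hf] := choice ex.
have : cover_compact K by rewrite -compact_cover.
move=> /(_ _ K (fun p => ball p (f p).1)) [].
- by move=> p _; exact: ball_open.
- move=> p Kp; exists p => //; apply: ballxx; by have [] := Hf p.
move=> D' D'K Kcov.
have [m m0 Hm] := @seq_min_pos R _ (finmap.enum_fset D') (fun p => (f p).2) (fun p => let: And3 _ h _ := Hf p in h).
exists m; split => // x y r Kx Kb xy r0 rm.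
have [p Dp px] := Kcov x Kx.
apply: hull_seg => t ht.
have [_ _ H] := Hf p.
apply: (H _ x y r t) => //.
- by have := D'K p Dp; rewrite inE.
- by move: px; rewrite -ball_normE.
- exact: lt_le_trans rm (Hm p Dp).
Qed.
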